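(* Let $T>0$ and let $\alpha,\beta:\mathbb{R}\to\mathbb{R}$ be continuous $T$-periodic functions such that $\alpha=0$ on $[\tfrac T2,T]$, $\beta=0$ on $[0,\tfrac T2]$, $\alpha>0$ on $(0,\tfrac T2)$, $\beta>0$ on $(\tfrac T2,T)$, and $\int_0^T\alpha=\int_0^T\beta=:A>0$. For $x\in\mathbb{R}$ define $E_0(x):=1$, $E_1(x):=e^{(1-x)A}$ and, for $n\ge2$, \[ E_n(x):=\begin{cases} \exp\!\Big(\big[x(E_1(x)+E_3(x)+\cdots+E_{n-1}(x))-\tfrac n2\big]A\Big), & n \text{ even},\\[4pt] \exp\!\Big(\big[\tfrac{n+1}{2}-x(E_0(x)+E_2(x)+\cdots+E_{n-1}(x))\big]A\Big), & n\text{ odd}.\end{cases} \] Then for every integer $n\ge1$ and every $x>0$, \[ \mathcal{P}_n(x,x)=\big(xE_{2n-1}(x),\,xE_{2n}(x)\big). \]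
   Context: $\mathcal{P}_n(u_0,v_0):=(u(nT),v(nT))$, where $(u,v)$ is the solution of $u'=\alpha(t)u(1-v)$, $v'=\beta(t)v(-1+u)$ with $(u(0),v(0))=(u_0,v_0)$ (the $nT$-time Poincaré map). *)

(* Defs.v *)
From Stdlib Require Import Reals List Arith.
From Coquelicot Require Import Coquelicot.
Import ListNotations.
Open Scope R_scope.

Definition sum_idx (P : nat -> bool) (l : list R) : R :=
  fold_right Rplus 0
    (map (fun i => if P i then nth i l 0 else 0) (seq 0 (length l))).

(* Given l = [E_0; ...; E_{n-1}], compute E_n (n >= 1). *)
Definition E_next (A x : R) (l : list R) (n : nat) : R :=
  if Nat.eqb n 1 then exp ((1 - x) * A)
  else if Nat.even n then
    exp ((x * sum_idx Nat.odd l - INR n / 2) * A)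
  else
    exp ((INR (n + 1) / 2 - x * sum_idx Nat.even l) * A).

Fixpoint E_list (A x : R) (n : nat) : list R :=
  match n with
  | O => [1]
  | S m => let l := E_list A x m in l ++ [E_next A x l (S m)]
  end.

Definition E (A : R) (n : nat) (x : R) : R := nth n (E_list A x n) 0.

Definition is_LV_solution (alpha beta : R -> R) (u0 v0 : R) (u v : R -> R) : Prop :=
  u 0 = u0 /\ v 0 = v0 /\
  (forall t, is_derive u t (alpha t * u t * (1 - v t))) /\
  (forall t, is_derive v t (beta t * v t * (-1 + u t))).

(* Main.v *)
Require Import Defs.
From Stdlib Require Import Reals Lra Lia ZArith List.
From Coquelicot Require Import Coquelicot.
Import ListNotations.
Open Scope R_scope.

Lemma const_deriv (f : R -> R) a b :
  (forall c, Rmin a b <= c <= Rmax a b -> is_derive f c 0) -> f b = f a.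
Proof.
  intros H.
  destruct (MVT_abs f (fun _ => 0) a b) as [c [Hc _]].
  { intros c Hc. apply is_derive_Reals. apply H; auto. }
  rewrite Rabs_R0, Rmult_0_l in Hc.
  apply Rabs_eq_0 in Hc. lra.
Qed.

Lemma F_deriv (f : R -> R) : (forall t, continuous f t) ->
  forall t, is_derive (fun s => RInt f 0 s) t (f t).
Proof.
  intros Hc t.
  apply (is_derive_RInt f (fun s => RInt f 0 s) 0 t); auto.
  apply filter_forall. intros b. apply (RInt_correct (V:=R_CompleteNormedModule)).
  apply ex_RInt_continuous. intros; auto.
Qed.

Lemma F_shift (f : R -> R) T A : (forall t, continuous f t) ->
  (forall t, f (t + T) = f t) -> RInt f 0 T = A ->
  forall t, RInt f 0 (t + T) = RInt f 0 t + A.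
Proof.
  intros Hc Hp HA t.
  set (F := fun s => RInt f 0 s).
  assert (H : (fun s => F (s + T) - F s) t = (fun s => F (s + T) - F s) 0).
  { apply (const_deriv (fun s => F (s + T) - F s) 0 t). intros c _.
    assert (D1 := F_deriv f Hc (c + T)). assert (D2 := F_deriv f Hc c).
    fold F in D1, D2.
    auto_derive.
    - split; [exists (f (c+T)); exact D1 | split; auto; exists (f c); exact D2].
    - replace (Derive (fun x : R => F x) (c+T)) with (f (c+T)) by (symmetry; apply is_derive_unique; exact D1).
      replace (Derive (fun x : R => F x) c) with (f c) by (symmetry; apply is_derive_unique; exact D2). rewrite Hp. ring. }
  simpl in H. unfold F in H. rewrite Rplus_0_l, RInt_point in H.
  unfold zero in H; simpl in H. unfold F. rewrite <- HA. lra.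
Qed.

Lemma glue (f g h : R -> R) c d l : 0 < d ->
  (forall s, c - d < s < c -> f s = g s) ->
  (forall s, c <= s < c + d -> f s = h s) -> g c = h c ->
  is_derive g c l -> is_derive h c l -> is_derive f c l.
Proof.
  intros Hd Hl Hr Hgh Dg Dh.
  apply is_derive_Reals in Dg. apply is_derive_Reals in Dh.
  apply is_derive_Reals. intros eps Heps.
  destruct (Dg eps Heps) as [dg Hg]. destruct (Dh eps Heps) as [dh Hh].
  assert (Hpos : 0 < Rmin d (Rmin dg dh)).
  { destruct dg, dh; simpl. repeat apply Rmin_pos; auto. }
  exists (mkposreal _ Hpos). intros hh Hne Hlt. simpl in Hlt.
  assert (H1 := Rmin_l d (Rmin dg dh)).
  assert (H2 := Rmin_l dg dh). assert (H3 := Rmin_r dg dh).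
  assert (H4 := Rmin_r d (Rmin dg dh)).
  assert (Hfc : f c = h c) by (apply Hr; lra).
  apply Rabs_def2 in Hlt.
  destruct (Rlt_or_le hh 0) as [Hn|Hp].
  - rewrite (Hl (c + hh)) by lra. rewrite Hfc, <- Hgh. apply Hg; auto.
    apply Rabs_def1; lra.
  - rewrite (Hr (c + hh)) by lra. rewrite Hfc. apply Hh; auto.
    apply Rabs_def1; lra.
Qed.

Lemma Zshift (g : R -> R) (c d : R) : (forall t, g (t + d) = g t + c) ->
  forall k t, g (t + IZR k * d) = g t + IZR k * c.
Proof.
  intros H.
  assert (Hn : forall n t, g (t + INR n * d) = g t + INR n * c).
  { induction n; intros t.
    - simpl. rewrite !Rmult_0_l, !Rplus_0_r. auto.
    - rewrite S_INR. replace (t + (INR n + 1) * d) with ((t + INR n * d) + d) by ring.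
      rewrite H, IHn. ring. }
  intros k t. destruct k as [|p|p].
  - simpl. rewrite !Rmult_0_l, !Rplus_0_r. auto.
  - rewrite <- positive_nat_Z, <- INR_IZR_INZ. apply Hn.
  - replace (IZR (Z.neg p)) with (- INR (Pos.to_nat p)).
    2:{ rewrite <- Pos2Z.opp_pos, opp_IZR, <- positive_nat_Z, <- INR_IZR_INZ. auto. }
    specialize (Hn (Pos.to_nat p) (t + - INR (Pos.to_nat p) * d)).
    replace (t + - INR (Pos.to_nat p) * d + INR (Pos.to_nat p) * d) with t in Hn by ring.
    lra.
Qed.

Definition fl (y : R) : Z := (up y - 1)%Z.

Lemma fl_spec y : IZR (fl y) <= y < IZR (fl y) + 1.
Proof.
  unfold fl. rewrite minus_IZR. destruct (archimed y). lra.
Qed.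

Lemma fl_unique y k : IZR k <= y < IZR k + 1 -> fl y = k.
Proof.
  intros H. unfold fl. rewrite <- (tech_up y (k + 1)).
  - lia.
  - rewrite plus_IZR. lra.
  - rewrite plus_IZR. lra.
Qed.

Lemma E_list_len A x m : length (E_list A x m) = S m.
Proof. induction m; simpl; auto. rewrite length_app, IHm. simpl. lia. Qed.

Lemma E_list_nth A x m i : (i <= m)%nat -> nth i (E_list A x m) 0 = E A i x.
Proof.
  induction m; intros Hi.
  - assert (i = 0%nat) by lia. subst. reflexivity.
  - destruct (Nat.eq_dec i (S m)) as [->|Hne]; [reflexivity|].
    simpl. rewrite app_nth1 by (rewrite E_list_len; lia). apply IHm. lia.
Qed.

Lemma E_succ A x m : E A (S m) x = E_next A x (E_list A x m) (S m).
Proof.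
  unfold E at 1. simpl. rewrite app_nth2 by (rewrite E_list_len; lia).
  rewrite E_list_len, Nat.sub_diag. reflexivity.
Qed.

Lemma fold_plus (M : list R) c : fold_right Rplus c M = fold_right Rplus 0 M + c.
Proof. induction M; simpl; [ring|rewrite IHM; ring]. Qed.

Lemma sum_idx_snoc P l a :
  sum_idx P (l ++ [a]) = sum_idx P l + (if P (length l) then a else 0).
Proof.
  unfold sum_idx. rewrite length_app. simpl.
  rewrite Nat.add_1_r, seq_S, map_app, fold_right_app. simpl.
  rewrite app_nth2 by lia. rewrite Nat.sub_diag. simpl.
  rewrite fold_plus, Rplus_0_r. f_equal. f_equal.
  apply map_ext_in. intros i Hi. apply in_seq in Hi.
  rewrite app_nth1 by lia. reflexivity.
Qed.

Definition Ev A x m := sum_idx Nat.even (E_list A x m).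
Definition Od A x m := sum_idx Nat.odd (E_list A x m).

Lemma Ev_S A x m : Ev A x (S m) = Ev A x m + (if Nat.even (S m) then E A (S m) x else 0).
Proof.
  unfold Ev. simpl (E_list A x (S m)). rewrite sum_idx_snoc, E_list_len.
  rewrite <- E_succ. reflexivity.
Qed.

Lemma Od_S A x m : Od A x (S m) = Od A x m + (if Nat.odd (S m) then E A (S m) x else 0).
Proof.
  unfold Od. simpl (E_list A x (S m)). rewrite sum_idx_snoc, E_list_len.
  rewrite <- E_succ. reflexivity.
Qed.

Lemma Ev0 A x : Ev A x 0 = 1.
Proof. unfold Ev, sum_idx. simpl. ring. Qed.
Lemma Od0 A x : Od A x 0 = 0.
Proof. unfold Od, sum_idx. simpl. ring. Qed.

Lemma E_odd A x n : E A (2*n+1) x = exp ((INR (n+1) - x * Ev A x (2*n)) * A).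
Proof.
  replace (2*n+1)%nat with (S (2*n)) by lia. rewrite E_succ.
  unfold E_next. destruct n as [|n].
  - simpl. fold (Ev A x 0). rewrite Ev0. f_equal. f_equal. simpl. ring.
  - replace (Nat.eqb (S (2 * S n)) 1) with false by (symmetry; apply Nat.eqb_neq; lia).
    replace (Nat.even (S (2 * S n))) with false.
    2:{ replace (S (2 * S n)) with (1 + 2 * S n)%nat by lia. rewrite Nat.even_add_mul_2. reflexivity. }
    fold (Ev A x (2 * S n)). f_equal. f_equal. f_equal.
    replace (S (2 * S n) + 1)%nat with (2 * (S n + 1))%nat by lia. rewrite mult_INR. simpl (INR 2). field.
Qed.

Lemma E_even A x n : E A (2*n+2) x = exp ((x * Od A x (2*n+1) - INR (n+1)) * A).
Proof.
  replace (2*n+2)%nat with (S (2*n+1)) by lia. rewrite E_succ.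
  unfold E_next.
  replace (Nat.eqb (S (2 * n + 1)) 1) with false by (symmetry; apply Nat.eqb_neq; lia).
  replace (Nat.even (S (2 * n + 1))) with true.
  2:{ replace (S (2 * n + 1)) with (0 + 2 * (n + 1))%nat by lia. rewrite Nat.even_add_mul_2. reflexivity. }
  fold (Od A x (2 * n + 1)). f_equal. f_equal. f_equal.
  replace (S (2 * n + 1)) with (2 * (n + 1))%nat by lia. rewrite mult_INR. simpl (INR 2). field.
Qed.

Lemma E_rec_odd A x n :
  E A (2*n+3) x = E A (2*n+1) x * exp ((1 - x * E A (2*n+2) x) * A).
Proof.
  replace (2*n+3)%nat with (2*(n+1)+1)%nat by lia.
  rewrite !E_odd, <- exp_plus.
  replace (2*(n+1))%nat with (S (S (2*n))) by lia.
  rewrite !Ev_S.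
  replace (Nat.even (S (2*n))) with false.
  2:{ replace (S (2 * n)) with (1 + 2 * n)%nat by lia. rewrite Nat.even_add_mul_2. reflexivity. }
  replace (Nat.even (S (S (2*n)))) with true.
  2:{ replace (S (S (2 * n))) with (0 + 2 * (n+1))%nat by lia. rewrite Nat.even_add_mul_2. reflexivity. }
  replace (S (S (2*n))) with (2*n+2)%nat by lia.
  f_equal. rewrite !plus_INR. simpl (INR 1). ring.
Qed.

Lemma E_rec_even A x n :
  E A (2*n+4) x = E A (2*n+2) x * exp ((x * E A (2*n+3) x - 1) * A).
Proof.
  replace (2*n+4)%nat with (2*(n+1)+2)%nat by lia.
  rewrite !E_even, <- exp_plus.
  replace (2*(n+1)+1)%nat with (S (S (2*n+1))) by lia.
  rewrite !Od_S.
  replace (Nat.odd (S (2*n+1))) with false.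
  2:{ rewrite Nat.odd_succ. replace (2 * n + 1)%nat with (1 + 2 * n)%nat by lia. rewrite Nat.even_add_mul_2. reflexivity. }
  replace (Nat.odd (S (S (2*n+1)))) with true.
  2:{ rewrite Nat.odd_succ. replace (S (2 * n + 1)) with (0 + 2 * (n+1))%nat by lia. rewrite Nat.even_add_mul_2. reflexivity. }
  replace (S (S (2*n+1))) with (2*n+3)%nat by lia.
  f_equal. rewrite !plus_INR. simpl (INR 1). ring.
Qed.

Lemma E_one A x : E A 1 x = exp ((1 - x) * A).
Proof. reflexivity. Qed.

Lemma E_two A x : E A 2 x = exp ((x * E A 1 x - 1) * A).
Proof.
  change 2%nat with (2*0+2)%nat at 1. rewrite (E_even A x 0). change (2*0+1)%nat with 1%nat. rewrite (Od_S A x 0), Od0.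
  simpl. f_equal. ring.
Qed.

Lemma der_cexp (F : R -> R) C a b s dF : is_derive F s dF ->
  is_derive (fun t => C * exp (a * (F t - b))) s (C * exp (a * (F s - b)) * (a * dF)).
Proof.
  intros D. auto_derive.
  - exists dF; exact D.
  - replace (Derive (fun x : R => F x) s) with dF by (symmetry; apply is_derive_unique; exact D). unfold Rminus. ring.
Qed.

Lemma der_uexp (u F : R -> R) a s du dF : is_derive u s du -> is_derive F s dF ->
  is_derive (fun t => u t * exp (a * F t)) s (du * exp (a * F s) + u s * exp (a * F s) * (a * dF)).
Proof.
  intros Du D. auto_derive.
  - split; [exists du; exact Du|split; auto; exists dF; exact D].
  - replace (Derive (fun x : R => F x) s) with dF by (symmetry; apply is_derive_unique; exact D).
    replace (Derive (fun x : R => u x) s) with du by (symmetry; apply is_derive_unique; exact Du). unfold Rminus. ring.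
Qed.

Definition Hyp T (alpha beta : R -> R) (A : R) :=
  0 < T /\ (forall t, continuous alpha t) /\ (forall t, continuous beta t) /\
  (forall t, alpha (t + T) = alpha t) /\ (forall t, beta (t + T) = beta t) /\
  (forall t, T / 2 <= t <= T -> alpha t = 0) /\
  (forall t, 0 <= t <= T / 2 -> beta t = 0) /\
  RInt alpha 0 T = A /\ RInt beta 0 T = A.

Ltac dh H := destruct H as (HT & Hca & Hcb & Hpa & Hpb & Hza & Hzb & HA & HB).

Lemma per_Z (f : R -> R) T : (forall t, f (t + T) = f t) ->
  forall k t, f (t + IZR k * T) = f t.
Proof.
  intros H k t. rewrite (Zshift f 0 T); [ring|]. intros; rewrite H; ring.
Qed.

Lemma FZ (f : R -> R) T (A : R) : (forall t, continuous f t) ->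
  (forall t, f (t + T) = f t) -> RInt f 0 T = A ->
  forall k t, RInt f 0 (t + IZR k * T) = RInt f 0 t + IZR k * A.
Proof.
  intros Hc Hp HA k t. apply (Zshift (fun s => RInt f 0 s)). apply F_shift; auto.
Qed.

Lemma RInt0 (f : R -> R) : RInt f 0 0 = 0.
Proof. rewrite RInt_point. reflexivity. Qed.

Lemma Fa_half T alpha beta (A : R) : Hyp T alpha beta A ->
  forall s, T / 2 <= s <= T -> RInt alpha 0 s = A.
Proof.
  intros H s Hs. dh H. rewrite <- HA. symmetry.
  apply (const_deriv (fun s => RInt alpha 0 s) s T).
  intros c Hc. rewrite Rmin_left in Hc by lra. rewrite Rmax_right in Hc by lra.
  assert (D := F_deriv alpha Hca c). rewrite (Hza c) in D by lra. exact D.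
Qed.

Lemma Fb_half T alpha beta (A : R) : Hyp T alpha beta A ->
  forall s, 0 <= s <= T / 2 -> RInt beta 0 s = 0.
Proof.
  intros H s Hs. dh H. transitivity (RInt beta 0 0); [|apply RInt0].
  apply (const_deriv (fun s => RInt beta 0 s) 0 s).
  intros c Hc. rewrite Rmin_left in Hc by lra. rewrite Rmax_right in Hc by lra.
  assert (D := F_deriv beta Hcb c). rewrite (Hzb c) in D by lra. exact D.
Qed.

Lemma is_derive_eq (f : R -> R) (x l l' : R) : is_derive f x l -> (l = l' :> R) -> is_derive f x l'.
Proof. intros D ->. exact D. Qed.

Lemma exp_cancel a X : exp (- a * X) * exp (a * X) = 1.
Proof. rewrite <- exp_plus. replace (- a * X + a * X) with 0 by ring. apply exp_0. Qed.

Lemma step_uniq T alpha beta (A : R) (u v : R -> R) (k : Z) : Hyp T alpha beta A ->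
  (forall t, is_derive u t (alpha t * u t * (1 - v t))) ->
  (forall t, is_derive v t (beta t * v t * (-1 + u t))) ->
  u (IZR k * T + T) = u (IZR k * T) * exp ((1 - v (IZR k * T)) * A) /\
  v (IZR k * T + T) = v (IZR k * T) * exp ((u (IZR k * T + T) - 1) * A).
Proof.
  intros H Du Dv.
  assert (Hfa := Fa_half _ _ _ _ H). assert (Hfb := Fb_half _ _ _ _ H).
  dh H.
  set (c := IZR k * T).
  assert (Hal : forall z, alpha z = alpha (z - c)).
  { intros z. rewrite <- (per_Z alpha T Hpa k (z - c)). unfold c. f_equal. ring. }
  assert (Hbe : forall z, beta z = beta (z - c)).
  { intros z. rewrite <- (per_Z beta T Hpb k (z - c)). unfold c. f_equal. ring. }
  assert (Fa_c : forall s, RInt alpha 0 (s + c) = RInt alpha 0 s + IZR k * A)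
    by (intros; apply FZ; auto).
  assert (Fb_c : forall s, RInt beta 0 (s + c) = RInt beta 0 s + IZR k * A)
    by (intros; apply FZ; auto).
  assert (Hv1 : forall s, c <= s <= c + T / 2 -> v s = v c).
  { intros s Hs. apply (const_deriv v c s). intros z Hz.
    rewrite Rmin_left in Hz by lra. rewrite Rmax_right in Hz by lra.
    replace 0 with (beta z * v z * (-1 + u z)); [apply Dv|].
    rewrite Hbe, Hzb by lra. ring. }
  set (a := - (1 - v c)).
  assert (Hw : u (c + T / 2) * exp (a * RInt alpha 0 (c + T / 2)) =
               u c * exp (a * RInt alpha 0 c)).
  { apply (const_deriv (fun t => u t * exp (a * RInt alpha 0 t)) c (c + T / 2)).
    intros z Hz. rewrite Rmin_left in Hz by lra. rewrite Rmax_right in Hz by lra.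
    apply (is_derive_eq _ _ _ _ (der_uexp u (fun t => RInt alpha 0 t) a z _ _ (Du z) (F_deriv alpha Hca z))).
    rewrite (Hv1 z) by lra. unfold a. ring. }
  assert (E1 : RInt alpha 0 (c + T / 2) = A + IZR k * A :> R).
  { rewrite Rplus_comm, Fa_c, Hfa; auto; lra. }
  assert (E2 : RInt alpha 0 c = IZR k * A :> R).
  { replace c with (0 + c) by ring. rewrite Fa_c, RInt0. ring. }
  rewrite E1, E2 in Hw.
  assert (Hu1 : u (c + T / 2) = u c * exp ((1 - v c) * A)).
  { assert (Hc1 : exp (a * (A + IZR k * A)) * exp ((1 - v c) * (A + IZR k * A)) = 1)
      by (unfold a; apply exp_cancel).
    transitivity (u (c + T / 2) * (exp (a * (A + IZR k * A)) * exp ((1 - v c) * (A + IZR k * A))));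
      [rewrite Hc1; ring|].
    rewrite <- Rmult_assoc, Hw, Rmult_assoc, <- exp_plus. f_equal. f_equal.
    unfold a. ring. }
  assert (Hu2 : forall s, c + T / 2 <= s <= c + T -> u s = u (c + T / 2)).
  { intros s Hs. apply (const_deriv u (c + T / 2) s). intros z Hz.
    rewrite Rmin_left in Hz by lra. rewrite Rmax_right in Hz by lra.
    replace 0 with (alpha z * u z * (1 - v z)); [apply Du|].
    rewrite Hal, Hza by lra. ring. }
  assert (Hu : u (c + T) = u c * exp ((1 - v c) * A)).
  { rewrite Hu2 by lra. exact Hu1. }
  split; [exact Hu|].
  set (b := - (u (c + T) - 1)).
  assert (Hw2 : v (c + T) * exp (b * RInt beta 0 (c + T)) =
               v (c + T / 2) * exp (b * RInt beta 0 (c + T / 2))).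
  { apply (const_deriv (fun t => v t * exp (b * RInt beta 0 t)) (c + T / 2) (c + T)).
    intros z Hz. rewrite Rmin_left in Hz by lra. rewrite Rmax_right in Hz by lra.
    apply (is_derive_eq _ _ _ _ (der_uexp v (fun t => RInt beta 0 t) b z _ _ (Dv z) (F_deriv beta Hcb z))).
    rewrite (Hu2 z), <- (Hu2 (c + T)) by lra. unfold b. ring. }
  assert (E3 : RInt beta 0 (c + T) = A + IZR k * A :> R).
  { rewrite Rplus_comm, Fb_c, HB. ring. }
  assert (E4 : RInt beta 0 (c + T / 2) = IZR k * A :> R).
  { rewrite Rplus_comm, Fb_c, Hfb; [ring|lra]. }
  rewrite E3, E4, (Hv1 (c + T / 2)) in Hw2 by lra.
  assert (Hc1 : exp (b * (A + IZR k * A)) * exp ((u (c + T) - 1) * (A + IZR k * A)) = 1)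
    by (unfold b; apply exp_cancel).
  transitivity (v (c + T) * (exp (b * (A + IZR k * A)) * exp ((u (c + T) - 1) * (A + IZR k * A))));
    [rewrite Hc1; ring|].
  rewrite <- Rmult_assoc, Hw2, Rmult_assoc, <- exp_plus. f_equal. f_equal.
  unfold b. ring.
Qed.

Lemma fl_period T t k : 0 < T -> IZR k * T <= t < IZR k * T + T -> fl (t / T) = k.
Proof.
  intros HT Ht. apply fl_unique.
  assert (Ht' : t = (t / T) * T) by (field; lra).
  rewrite Ht' in Ht. split.
  - apply (Rmult_le_reg_r T); lra.
  - apply (Rmult_lt_reg_r T); lra.
Qed.

Lemma fl_range T t : 0 < T -> IZR (fl (t / T)) * T <= t < IZR (fl (t / T)) * T + T.
Proof.
  intros HT. destruct (fl_spec (t / T)) as [H1 H2].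
  assert (Ht' : t = (t / T) * T) by (field; lra).
  split.
  - rewrite Ht' at 2. apply Rmult_le_compat_r; lra.
  - rewrite Ht' at 1. replace (IZR (fl (t / T)) * T + T) with ((IZR (fl (t / T)) + 1) * T) by ring.
    apply Rmult_lt_compat_r; lra.
Qed.

Lemma pw_deriv T (G : Z -> R -> R) (DG : Z -> R -> R) (D : R -> R) t : 0 < T ->
  (forall k y, is_derive (G k) y (DG k y)) ->
  (forall k y, IZR k * T <= y < IZR k * T + T -> DG k y = D y) ->
  (forall k, G (k - 1)%Z (IZR k * T) = G k (IZR k * T)) ->
  (forall k, DG (k - 1)%Z (IZR k * T) = D (IZR k * T)) ->
  is_derive (fun y => G (fl (y / T)) y) t (D t).
Proof.
  intros HT HG Hin Hj Hjd.
  set (k := fl (t / T)).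
  assert (Hr : IZR k * T <= t < IZR k * T + T) by (apply fl_range; auto).
  destruct (Req_dec t (IZR k * T)) as [Heq|Hne].
  - rewrite Heq.
    apply (glue _ (G (k - 1)%Z) (G k) (IZR k * T) T (D (IZR k * T))); auto.
    + intros s Hs. rewrite (fl_period T s (k - 1)); auto.
      rewrite minus_IZR. simpl (IZR 1). lra.
    + intros s Hs. rewrite (fl_period T s k); auto.
    + rewrite <- Hjd. apply HG.
    + rewrite <- (Hin k (IZR k * T)) by lra. apply HG.
  - apply (is_derive_ext_loc (G k)).
    + apply (locally_interval _ t (IZR k * T) (IZR k * T + T)); simpl; try lra.
      intros y Hy1 Hy2. rewrite (fl_period T y k); auto. lra.
    + rewrite <- (Hin k t) by lra. apply HG.
Qed.

Definition Pm (A : R) (p : R * R) : R * R :=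
  let u1 := fst p * exp ((1 - snd p) * A) in (u1, snd p * exp ((u1 - 1) * A)).
Definition Qm (A : R) (p : R * R) : R * R :=
  let v0 := snd p * exp (- (fst p - 1) * A) in (fst p * exp (- (1 - v0) * A), v0).

Lemma PQ A p : Pm A (Qm A p) = p.
Proof.
  destruct p as [a b]. unfold Pm, Qm; simpl.
  rewrite Rmult_assoc, <- exp_plus.
  replace (- (1 - b * exp (- (a - 1) * A)) * A + (1 - b * exp (- (a - 1) * A)) * A) with 0 by ring.
  rewrite exp_0, Rmult_1_r, Rmult_assoc, <- exp_plus.
  replace (- (a - 1) * A + (a - 1) * A) with 0 by ring. rewrite exp_0, Rmult_1_r. reflexivity.
Qed.

Definition Sq A x0 (k : Z) : R * R :=
  match k with
  | Z0 => x0
  | Zpos p => Nat.iter (Pos.to_nat p) (Pm A) x0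
  | Zneg p => Nat.iter (Pos.to_nat p) (Qm A) x0
  end.

Lemma Sq_succ A x0 k : Sq A x0 (k + 1) = Pm A (Sq A x0 k).
Proof.
  destruct k as [|p|p].
  - reflexivity.
  - simpl. rewrite Pos2Nat.inj_add, Nat.add_1_r. reflexivity.
  - induction p as [|q _] using Pos.peano_ind.
    + simpl. rewrite PQ. reflexivity.
    + replace (Z.neg (Pos.succ q) + 1)%Z with (Z.neg q) by lia.
      simpl. rewrite Pos2Nat.inj_succ. simpl. rewrite PQ. reflexivity.
Qed.

Lemma exists_sol T alpha beta (A : R) x0 y0 : Hyp T alpha beta A ->
  exists u v, is_LV_solution alpha beta x0 y0 u v.
Proof.
  intros H.
  assert (Hfa := Fa_half _ _ _ _ H). assert (Hfb := Fb_half _ _ _ _ H).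
  dh H.
  set (U := fun k => fst (Sq A (x0, y0) k)).
  set (V := fun k => snd (Sq A (x0, y0) k)).
  assert (HU : forall k, U (k + 1)%Z = U k * exp ((1 - V k) * A)).
  { intros k. unfold U, V. rewrite Sq_succ. reflexivity. }
  assert (HV : forall k, V (k + 1)%Z = V k * exp ((U (k + 1)%Z - 1) * A)).
  { intros k. unfold U, V. rewrite Sq_succ. reflexivity. }
  set (g := fun k t => U k * exp ((1 - V k) * (RInt alpha 0 t - IZR k * A))).
  set (h := fun k t => V k * exp ((U (k + 1)%Z - 1) * (RInt beta 0 t - IZR k * A))).
  set (u := fun y => g (fl (y / T)) y).
  set (v := fun y => h (fl (y / T)) y).
  assert (Hper : forall k y, IZR k * T <= y < IZR k * T + T -> u y = g k y /\ v y = h k y).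
  { intros k y Hy. unfold u, v. rewrite (fl_period T y k); auto. }
  assert (Hal : forall k z, alpha z = alpha (z - IZR k * T)).
  { intros k z. rewrite <- (per_Z alpha T Hpa k (z - IZR k * T)). f_equal. ring. }
  assert (Hbe : forall k z, beta z = beta (z - IZR k * T)).
  { intros k z. rewrite <- (per_Z beta T Hpb k (z - IZR k * T)). f_equal. ring. }
  assert (Fa_c : forall k z, RInt alpha 0 z = RInt alpha 0 (z - IZR k * T) + IZR k * A :> R).
  { intros k z. rewrite <- (FZ alpha T A Hca Hpa HA k). f_equal. ring. }
  assert (Fb_c : forall k z, RInt beta 0 z = RInt beta 0 (z - IZR k * T) + IZR k * A :> R).
  { intros k z. rewrite <- (FZ beta T A Hcb Hpb HB k). f_equal. ring. }
  assert (a0 : forall k, alpha (IZR k * T) = 0).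
  { intros k. rewrite (Hal k). replace (IZR k * T - IZR k * T) with (0 + T - T) by ring.
    rewrite Rplus_0_l, Rminus_diag. rewrite <- (Hpa 0), Rplus_0_l. apply Hza. lra. }
  assert (b0 : forall k, beta (IZR k * T) = 0).
  { intros k. rewrite (Hbe k), Rminus_diag. apply Hzb. lra. }
  assert (Fak : forall k, RInt alpha 0 (IZR k * T) = IZR k * A :> R).
  { intros k. rewrite (Fa_c k), Rminus_diag, RInt0. ring. }
  assert (Fbk : forall k, RInt beta 0 (IZR k * T) = IZR k * A :> R).
  { intros k. rewrite (Fb_c k), Rminus_diag, RInt0. ring. }
  assert (Hkm : forall k, IZR k - IZR (k - 1) = 1).
  { intros k. rewrite minus_IZR. simpl. ring. }
  exists u, v. split; [|split; [|split]].
  - unfold u, g. rewrite (fl_period T 0 0) by (simpl; lra).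
    simpl IZR. rewrite RInt0. unfold U, V. simpl.
    replace ((1 - y0) * (0 - 0 * A)) with 0 by ring. rewrite exp_0. ring.
  - unfold v, h. rewrite (fl_period T 0 0) by (simpl; lra).
    simpl IZR. rewrite RInt0. unfold U, V. simpl.
    replace (_ * (0 - 0 * A)) with 0 by ring. rewrite exp_0. ring.
  - intros t.
    apply (pw_deriv T g (fun k y => g k y * ((1 - V k) * alpha y))
             (fun y => alpha y * u y * (1 - v y)) t HT).
    + intros k y. apply der_cexp. apply F_deriv; auto.
    + intros k y Hy. destruct (Hper k y Hy) as [-> ->].
      destruct (Rle_lt_dec (y - IZR k * T) (T / 2)) as [Hs|Hs].
      * unfold h. rewrite (Fb_c k y), Hfb by lra.
        replace ((U (k + 1)%Z - 1) * (0 + IZR k * A - IZR k * A)) with 0 by ring.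
        rewrite exp_0. ring.
      * rewrite (Hal k y), Hza by lra. ring.
    + intros k. unfold g. rewrite !Fak.
      replace (IZR k * A - IZR k * A) with 0 by ring.
      replace (IZR k * A - IZR (k - 1) * A) with A
        by (rewrite <- Rmult_minus_distr_r, Hkm; ring).
      rewrite <- HU. replace (k - 1 + 1)%Z with k by ring. rewrite Rmult_0_r, exp_0. ring.
    + intros k. rewrite !a0. ring.
  - intros t.
    apply (pw_deriv T h (fun k y => h k y * ((U (k + 1)%Z - 1) * beta y))
             (fun y => beta y * v y * (-1 + u y)) t HT).
    + intros k y. apply der_cexp. apply F_deriv; auto.
    + intros k y Hy. destruct (Hper k y Hy) as [-> ->].
      destruct (Rle_lt_dec (y - IZR k * T) (T / 2)) as [Hs|Hs].
      * rewrite (Hbe k y), Hzb by lra. ring.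
      * unfold g. rewrite (Fa_c k y), Hfa by lra.
        replace (A + IZR k * A - IZR k * A) with A by ring.
        rewrite <- HU. ring.
    + intros k. unfold h. rewrite !Fbk.
      replace (IZR k * A - IZR k * A) with 0 by ring.
      replace (IZR k * A - IZR (k - 1) * A) with A
        by (rewrite <- Rmult_minus_distr_r, Hkm; ring).
      rewrite <- HV.
      replace (k - 1 + 1)%Z with k by ring. rewrite Rmult_0_r, exp_0. ring.
    + intros k. rewrite !b0. ring.
Qed.


Theorem proposition3p2 (T : R) (alpha beta : R -> R) (A : R) :
  0 < T ->
  (forall t, continuous alpha t) -> (forall t, continuous beta t) ->
  (forall t, alpha (t + T) = alpha t) -> (forall t, beta (t + T) = beta t) ->
  (forall t, T / 2 <= t <= T -> alpha t = 0) ->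
  (forall t, 0 <= t <= T / 2 -> beta t = 0) ->
  (forall t, 0 < t < T / 2 -> 0 < alpha t) ->
  (forall t, T / 2 < t < T -> 0 < beta t) ->
  RInt alpha 0 T = A -> RInt beta 0 T = A -> 0 < A ->
  forall (n : nat) (x : R), (1 <= n)%nat -> 0 < x ->
    (exists u v, is_LV_solution alpha beta x x u v) /\
    (forall u v, is_LV_solution alpha beta x x u v ->
       u (INR n * T) = x * E A (2 * n - 1) x /\
       v (INR n * T) = x * E A (2 * n) x).
Proof.
  intros HT Hca Hcb Hpa Hpb Hza Hzb _ _ HA HB _ n x Hn _.
  assert (H : Hyp T alpha beta A) by (repeat split; auto).
  split; [apply (exists_sol T alpha beta A); auto|].
  intros u v (Hu0 & Hv0 & Du & Dv).
  destruct n as [|m]; [lia|].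
  replace (2 * S m - 1)%nat with (2 * m + 1)%nat by lia.
  replace (2 * S m)%nat with (2 * m + 2)%nat by lia.
  clear Hn.
  induction m as [|m IH].
  - destruct (step_uniq T alpha beta A u v 0 H Du Dv) as [S1 S2].
    simpl IZR in S1, S2. rewrite Rmult_0_l, Rplus_0_l in S1, S2.
    rewrite Hu0, Hv0 in S1. rewrite Hv0 in S2.
    simpl INR. rewrite Rmult_1_l.
    change (2 * 0 + 1)%nat with 1%nat. change (2 * 0 + 2)%nat with 2%nat.
    rewrite E_two, E_one. rewrite S1 at 1. split; [reflexivity|].
    rewrite S2, S1. ring.
  - destruct (step_uniq T alpha beta A u v (Z.of_nat (S m)) H Du Dv) as [S1 S2].
    rewrite <- INR_IZR_INZ in S1, S2.
    replace (INR (S m) * T + T) with (INR (S (S m)) * T) in S1, S2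
      by (rewrite (S_INR (S m)); ring).
    destruct IH as [I1 I2].
    replace (2 * S m + 1)%nat with (2 * m + 3)%nat by lia.
    replace (2 * S m + 2)%nat with (2 * m + 4)%nat by lia.
    assert (S1' : u (INR (S (S m)) * T) = x * E A (2 * m + 3) x).
    { rewrite S1, I1, I2, E_rec_odd. ring. }
    split; [exact S1'|].
    rewrite S2, S1', I2, E_rec_even. ring.
Qed.
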